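(* Let $\Sigma\in\mathbb{R}^{n\times n}$ be positive semidefinite, $\Sigma_\Omega$ a best $k$-sparse approximation of $\Sigma$ and $\Sigma_{\Omega^c}=\Sigma-\Sigma_\Omega$. Let $\eta\in\mathbb{R}^{2m}$ with $\|\eta\|_1\le\epsilon_1$, $y=\mathcal A(\Sigma)+\eta$, and let $\hat\Sigma$ be any minimizer of $\min_M\|M\|_1$ subject to $M\succeq0$, $\|y-\mathcal A(M)\|_1\le\epsilon_1$. If there is an integer $K_2>2k$ with $$\frac{1-\gamma^{\mathrm{lb}}_{k+K_2}}{\sqrt2}-(1+\gamma^{\mathrm{ub}}_{K_2})\sqrt{\frac{k}{K_2}}\ge\beta_2>0,$$ then $$\|\hat\Sigma-\Sigma\|_{\mathrm F}\le\Big(\frac{C_1}{\beta_2}+C_3\Big)\frac{\|\Sigma_{\Omega^c}\|_1}{\sqrt{K_2}}+\frac{C_2}{\beta_2}\cdot\frac{\epsilon_1}{m}$$ for positive constants $C_1,C_2,C_3$ depending only on the RIP-$\ell_2/\ell_1$ constants.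
   Context: Fixed vectors $a_1,\dots,a_{2m}\in\mathbb{R}^n$; $A_i=a_ia_i^\top$; $\mathcal A(M)=(\langle A_i,M\rangle)_{i=1}^{2m}$; $B_i=A_{2i-1}-A_{2i}$; $\mathcal B(X)=(\langle B_i,X\rangle)_{i=1}^m$. $\|M\|_1$ is the entrywise $\ell_1$ norm. A best $k$-sparse approximation keeps the $k$ largest-magnitude entries. RIP-$\ell_2/\ell_1$ constants $\gamma_k^{\mathrm{lb}},\gamma_k^{\mathrm{ub}}$: the smallest numbers such that $(1-\gamma_k^{\mathrm{lb}})\|X\|_{\mathrm F}\le\frac1m\|\mathcal B(X)\|_1\le(1+\gamma_k^{\mathrm{ub}})\|X\|_{\mathrm F}$ for all symmetric $X$ with at most $k$ nonzero entries. *)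

(* Defs.v *)
From HB Require Import structures.
From mathcomp Require Import all_boot all_order all_algebra.
Set Implicit Arguments. Unset Strict Implicit. Unset Printing Implicit Defensive.
Import Order.TTheory GRing.Theory Num.Theory.
Local Open Scope ring_scope.

Section Defs.
Variable R : rcfType.

Definition l1mx n (M : 'M[R]_n) : R := \sum_(i < n) \sum_(j < n) `|M i j|.

Definition frob n (M : 'M[R]_n) : R := Num.sqrt (\sum_(i < n) \sum_(j < n) M i j ^+ 2).

Definition mxinner n (A M : 'M[R]_n) : R := \sum_(i < n) \sum_(j < n) A i j * M i j.

(* A_i = a_i a_i^T ; vectors indexed 0..2m-1 (0-based) *)
Definition Amx n (a : nat -> 'cV[R]_n) (i : nat) : 'M[R]_n := a i *m (a i)^T.

(* l1 norm of a vector in R^(2m) given as a sequence (first 2m entries) *)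
Definition l1vec (m : nat) (v : nat -> R) : R := \sum_(i < 2 * m) `|v i|.

Definition resid n m (a : nat -> 'cV[R]_n) (y : nat -> R) (M : 'M[R]_n) : R :=
  l1vec m (fun i => y i - mxinner (Amx a i) M).

(* B_i = A_{2i-1} - A_{2i} (1-based) = A_(2i) - A_(2i+1) (0-based);
   || B(X) ||_1 *)
Definition Bmx n (a : nat -> 'cV[R]_n) (i : nat) : 'M[R]_n :=
  Amx a (2 * i) - Amx a (2 * i).+1.
Definition l1B n m (a : nat -> 'cV[R]_n) (X : 'M[R]_n) : R :=
  \sum_(i < m) `|mxinner (Bmx a i) X|.

Definition symmx n (M : 'M[R]_n) : Prop := M^T = M.

Definition psd n (M : 'M[R]_n) : Prop :=
  symmx M /\ forall x : 'cV[R]_n, 0 <= (x^T *m M *m x) 0 0.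

Definition supp n (M : 'M[R]_n) : {set 'I_n * 'I_n} := [set p | M p.1 p.2 != 0].
Definition ksparse n (k : nat) (M : 'M[R]_n) : Prop := (#|supp M| <= k)%N.

Definition restr n (Om : {set 'I_n * 'I_n}) (M : 'M[R]_n) : 'M[R]_n :=
  \matrix_(i, j) (if (i, j) \in Om then M i j else 0).

(* Om is the support set of a best k-sparse approximation of S:
   it keeps k entries (or all entries if k >= n^2) of largest magnitude. *)
Definition best_ksparse_set n (k : nat) (S : 'M[R]_n) (Om : {set 'I_n * 'I_n}) : Prop :=
  #|Om| = minn k (n * n) /\
  forall p q, p \in Om -> q \notin Om -> `|S q.1 q.2| <= `|S p.1 p.2|.

Definition rip_lb_holds n m (a : nat -> 'cV[R]_n) (k : nat) (g : R) : Prop :=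
  forall X : 'M[R]_n, symmx X -> ksparse k X ->
    (1 - g) * frob X <= l1B m a X / m%:R.
Definition rip_ub_holds n m (a : nat -> 'cV[R]_n) (k : nat) (g : R) : Prop :=
  forall X : 'M[R]_n, symmx X -> ksparse k X ->
    l1B m a X / m%:R <= (1 + g) * frob X.

Definition is_gamma_lb n m (a : nat -> 'cV[R]_n) (k : nat) (g : R) : Prop :=
  rip_lb_holds m a k g /\ forall g', rip_lb_holds m a k g' -> g <= g'.
Definition is_gamma_ub n m (a : nat -> 'cV[R]_n) (k : nat) (g : R) : Prop :=
  rip_ub_holds m a k g /\ forall g', rip_ub_holds m a k g' -> g <= g'.

Definition feasible n m (a : nat -> 'cV[R]_n) (y : nat -> R) (eps : R) (M : 'M[R]_n) : Prop :=
  psd M /\ resid m a y M <= eps.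
Definition is_minimizer n m (a : nat -> 'cV[R]_n) (y : nat -> R) (eps : R) (Mh : 'M[R]_n) : Prop :=
  feasible m a y eps Mh /\ forall M, feasible m a y eps M -> l1mx Mh <= l1mx M.

End Defs.

(* Main.v *)
Require Import Defs.
From HB Require Import structures.
From mathcomp Require Import all_boot all_order all_algebra.
From mathcomp Require Import ring lra zify.
Import Order.TTheory GRing.Theory Num.Theory.
Set Implicit Arguments. Unset Strict Implicit. Unset Printing Implicit Defensive.
Local Open Scope ring_scope.


Lemma CS_sum (R : rcfType) (I : finType) (A : {set I}) (x : I -> R) :
  (\sum_(p in A) x p) ^+ 2 <= #|A|%:R * \sum_(p in A) x p ^+ 2.
Proof.
set S := \sum_(p in A) x p; set Q := \sum_(p in A) x p ^+ 2.
have h0 : 0 <= \sum_(p in A) \sum_(q in A) (x p - x q) ^+ 2.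
  by apply: sumr_ge0 => p _; apply: sumr_ge0 => q _; apply: sqr_ge0.
have e : \sum_(p in A) \sum_(q in A) (x p - x q) ^+ 2 =
         2 * (#|A|%:R * Q - S ^+ 2).
  have e1 : forall p, \sum_(q in A) (x p - x q) ^+ 2 =
      #|A|%:R * x p ^+ 2 + Q - 2 * x p * S.
    move=> p.
    have -> : \sum_(q in A) (x p - x q) ^+ 2 =
       \sum_(q in A) (x p ^+ 2 + x q ^+ 2 - 2 * x p * x q).
      by apply: eq_bigr => q _; ring.
    rewrite sumrB big_split /= sumr_const -/Q /S mulr_sumr.
    by rewrite -[x p ^+ 2 *+ _]mulr_natl.
  rewrite (eq_bigr _ (fun p _ => e1 p)) sumrB big_split /= -mulr_sumr -/Q.
  have -> : \sum_(i in A) 2 * x i * S = 2 * S * S by rewrite -mulr_suml -mulr_sumr.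
  rewrite sumr_const -mulr_natl.
  rewrite /S expr2; ring.
lra.
Qed.

Lemma max_exists (R : rcfType) (I : finType) (A : {set I}) (f : I -> R) :
  A != set0 -> exists2 q, q \in A & forall p, p \in A -> f p <= f q.
Proof.
case/set0Pn => q0 q0A.
have := @real_arg_maxP R I q0 (mem A) f q0A.
case=> [|q qA hq]; first by move=> i _; apply: num_real.
by exists q.
Qed.

Section Aux.
Variable R : rcfType.
Variable n : nat.
Implicit Types (H X Y : 'M[R]_n) (A B T : {set 'I_n * 'I_n}).

Definition sw (p : 'I_n * 'I_n) := (p.2, p.1).
Definition symset A := forall p, (sw p \in A) = (p \in A).
Definition ell H A := \sum_(p in A) `|H p.1 p.2|.
Definition qq H A := \sum_(p in A) H p.1 p.2 ^+ 2.

Lemma disjP' (A B : {set 'I_n * 'I_n}) :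
  (forall p, p \in A -> p \in B -> False) -> [disjoint A & B].
Proof.
move=> h; rewrite disjoints_subset; apply/subsetP => p pA; rewrite inE.
by apply/negP => pB; exact: h p pA pB.
Qed.

Lemma l1mx_restr H A : l1mx (restr A H) = ell H A.
Proof.
rewrite /l1mx pair_bigA /= /ell [in RHS]big_mkcond /=; apply: eq_bigr => [[i j]] _ /=.
by rewrite mxE; case: ifP => _; rewrite ?normr0.
Qed.

Lemma frob_restr H A : frob (restr A H) = Num.sqrt (qq H A).
Proof.
rewrite /frob pair_bigA /= /qq [in RHS]big_mkcond /=; congr Num.sqrt.
apply: eq_bigr => [[i j]] _ /=.
by rewrite mxE; case: ifP => _; rewrite ?expr0n.
Qed.

Lemma l1mx_all H : l1mx H = ell H setT.
Proof. by rewrite /l1mx pair_bigA /ell; apply: eq_bigl => p; rewrite in_setT. Qed.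

Lemma frob_all H : frob H = Num.sqrt (qq H setT).
Proof. by rewrite /frob pair_bigA /qq; congr Num.sqrt; apply: eq_bigl => p; rewrite in_setT. Qed.

Lemma restr_add H A B : [disjoint A & B] ->
  restr (A :|: B) H = restr A H + restr B H.
Proof.
move=> dAB; apply/matrixP => i j; rewrite !mxE in_setU.
case hA: ((i, j) \in A); case hB: ((i, j) \in B) => /=; rewrite ?addr0 ?add0r //.
by move: dAB => /disjointFr /(_ hA); rewrite hB.
Qed.

Lemma restrT H : restr setT H = H.
Proof. by apply/matrixP => i j; rewrite mxE in_setT. Qed.

Lemma restr0 H : restr set0 H = 0.
Proof. by apply/matrixP => i j; rewrite !mxE in_set0. Qed.

Lemma ell_add H A B : [disjoint A & B] -> ell H (A :|: B) = ell H A + ell H B.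
Proof.
move=> d; rewrite /ell -bigU //; apply: eq_bigl => p; by rewrite !inE.
Qed.

Lemma qq_add H A B : [disjoint A & B] -> qq H (A :|: B) = qq H A + qq H B.
Proof.
move=> d; rewrite /qq -bigU //; apply: eq_bigl => p; by rewrite !inE.
Qed.

Lemma ell_ge0 H A : 0 <= ell H A.
Proof. by apply: sumr_ge0 => p _. Qed.

Lemma qq_ge0 H A : 0 <= qq H A.
Proof. by apply: sumr_ge0 => p _; apply: sqr_ge0. Qed.

Lemma ell_sub H A B : A \subset B -> ell H A <= ell H B.
Proof.
move=> sAB; rewrite -(setID B A) (setIidPr sAB) ell_add; last first.
  apply: disjP' => p; rewrite !inE => pA /andP[nA _].
  by rewrite pA in nA.
by rewrite lerDl ell_ge0.
Qed.

Lemma qq_sub H A B : A \subset B -> qq H A <= qq H B.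
Proof.
move=> sAB; rewrite -(setID B A) (setIidPr sAB) qq_add; last first.
  apply: disjP' => p; rewrite !inE => pA /andP[nA _].
  by rewrite pA in nA.
by rewrite lerDl qq_ge0.
Qed.

Lemma restr_sym H A : symmx H -> symset A -> symmx (restr A H).
Proof.
move=> sH sA; apply/matrixP => i j; rewrite !mxE.
have := sA (i, j); rewrite /sw /= => ->.
by case: ifP => // _; rewrite -{1}sH mxE.
Qed.

Lemma restr_sparse H A k : (#|A| <= k)%N -> ksparse k (restr A H).
Proof.
move=> hA; rewrite /ksparse; apply: leq_trans hA; apply: subset_leq_card.
by apply/subsetP => -[i j]; rewrite inE mxE /=; case: ifP => // _; rewrite eqxx.
Qed.


Lemma sym_entry H i j : symmx H -> H j i = H i j.
Proof. by move=> sH; rewrite -{1}sH mxE. Qed.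

Lemma sw_inv p : sw (sw p) = p.
Proof. by case: p. Qed.

Lemma qq_le H A th : (forall p, p \in A -> `|H p.1 p.2| <= th) ->
  qq H A <= th * ell H A.
Proof.
move=> h; rewrite /qq /ell mulr_sumr; apply: ler_sum => p pA.
rewrite -real_normK ?num_real // expr2; apply: ler_wpM2r; first exact: normr_ge0.
exact: h.
Qed.

Lemma ell_cs H A : ell H A ^+ 2 <= #|A|%:R * qq H A.
Proof.
rewrite /ell /qq; have := @CS_sum R _ A (fun p => `|H p.1 p.2|) => /le_trans; apply.
by rewrite ler_wpM2l // le_eqVlt; apply/orP; left; apply/eqP; apply: eq_bigr => p _;
  rewrite real_normK ?num_real.
Qed.

Lemma ell_ge_entry H A p : p \in A -> `|H p.1 p.2| <= ell H A.
Proof.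
move=> pA; rewrite /ell (bigD1 p) //= lerDl; apply: sumr_ge0 => q _; exact: normr_ge0.
Qed.

Lemma frob_le_l1 H : frob H <= l1mx H.
Proof.
rewrite frob_all l1mx_all.
have h : qq H setT <= ell H setT ^+ 2.
  rewrite expr2; apply: qq_le => p pA; exact: ell_ge_entry.
rewrite -(ger0_norm (ell_ge0 H setT)) -sqrtr_sqr ler_sqrt //; exact: sqr_ge0.
Qed.

Lemma mxinnerD (B X Y : 'M[R]_n) : mxinner B (X + Y) = mxinner B X + mxinner B Y.
Proof.
rewrite /mxinner -big_split; apply: eq_bigr => i _; rewrite -big_split.
by apply: eq_bigr => j _; rewrite mxE mulrDr.
Qed.

Lemma mxinner0 (B : 'M[R]_n) : mxinner B 0 = 0.
Proof.
by rewrite /mxinner big1 // => i _; rewrite big1 // => j _; rewrite mxE mulr0.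
Qed.

Lemma l1B_add m (a : nat -> 'cV[R]_n) X Y : l1B m a (X + Y) <= l1B m a X + l1B m a Y.
Proof.
rewrite /l1B -big_split; apply: ler_sum => i _; rewrite mxinnerD; exact: ler_normD.
Qed.

Lemma l1B_0 m (a : nat -> 'cV[R]_n) : l1B m a 0 = 0.
Proof. by rewrite /l1B big1 // => i _; rewrite mxinner0 normr0. Qed.

Lemma l1B_ge0 m (a : nat -> 'cV[R]_n) X : 0 <= l1B m a X.
Proof. by apply: sumr_ge0 => i _; exact: normr_ge0. Qed.


Lemma hsw H p : symmx H -> H (sw p).1 (sw p).2 = H p.1 p.2.
Proof. by move=> sH; case: p => i j /=; rewrite sym_entry. Qed.

Lemma GB H (sH : symmx H) Rs (sR : symset Rs) c : exists T,
  [/\ T \subset Rs, symset T, (#|T| <= c)%N,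
   (forall p q, p \in T -> q \in Rs :\: T -> `|H q.1 q.2| <= `|H p.1 p.2|) &
   (T = Rs \/ (c <= #|T|.+1)%N)].
Proof.
elim: c => [|c [T [sTR sT cT uT oT]]].
  exists set0; split => //; first exact: sub0set.
  - by move=> p; rewrite !inE.
  - by rewrite cards0.
  - by move=> p q; rewrite inE.
  - by right.
have [eT|nT] := eqVneq T Rs.
  exists T; split => //; [exact: leqW | by left].
have [le|lt] := leqP c #|T|.
  exists T; split => //; [exact: leqW | by right].
have ceq : #|T|.+1 = c.
  case: oT => [eTR|hc]; first by rewrite eTR eqxx in nT.
  lia.
have ne : Rs :\: T != set0.
  apply/set0Pn; have: ~~ (Rs \subset T).
    by apply/negP => sRT; move/eqP: nT; apply; apply/eqP; rewrite eqEsubset sTR sRT.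
  case/subsetPn => q qR qT; exists q; by rewrite inE qT qR.
have [q qD hq] := @max_exists R _ _ (fun p => `|H p.1 p.2|) ne.
move: (qD); rewrite inE => /andP[qT qR].
have sqR : sw q \in Rs by rewrite sR.
exists (T :|: [set q; sw q]); split.
- by rewrite subUset sTR subUset !sub1set qR sqR.
- move=> p; rewrite !inE sT.
  have -> : (sw p == q) = (p == sw q).
    by rewrite -{1}(sw_inv q) (inj_eq (can_inj sw_inv)).
  by rewrite (inj_eq (can_inj sw_inv)) (orbC (p == q)).
- apply: leq_trans (leq_card_setU _ _).1 _; rewrite cards2; case: (q != sw q) => /=;
  by rewrite -ceq ?addn2 ?addn1 /=.
- move=> p r; rewrite !inE => /orP[pT|/orP[/eqP->|/eqP->]] /andP[rN rR];
  move: rN; rewrite negb_or => /andP[rT _].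
  + by apply: uT pT _; rewrite inE rT rR.
  + by apply: hq; rewrite inE rT rR.
  + by rewrite hsw //; apply: hq; rewrite inE rT rR.
- right; rewrite -ceq ltnS.
  apply: leq_trans (subset_leq_card (_ : q |: T \subset _)).
    by rewrite cardsU1 qT.
  by rewrite subUset sub1set !inE eqxx orbT subsetUl.
Qed.


Lemma split_set A B : A \subset B -> B = A :|: (B :\: A) /\ [disjoint A & B :\: A].
Proof.
move=> sAB; split; first by rewrite -{1}(setID B A) (setIidPr sAB).
by apply: disjP' => p pA; rewrite inE pA.
Qed.

Lemma upper_theta H T (Rs : {set 'I_n * 'I_n}) (N : nat) : T \subset Rs ->
  (forall p q, p \in T -> q \in Rs :\: T -> `|H q.1 q.2| <= `|H p.1 p.2|) ->
  (T = Rs \/ (N <= #|T|)%N) ->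
  exists th, [/\ 0 <= th, (forall p, p \in Rs :\: T -> `|H p.1 p.2| <= th) &
     th * N%:R <= ell H T].
Proof.
move=> sTR uT oT.
have [e0|ne] := eqVneq (Rs :\: T) set0.
  exists 0; split => //; first by move=> p; rewrite e0 inE.
  by rewrite mul0r ell_ge0.
have [q qD hq] := @max_exists R _ _ (fun p => `|H p.1 p.2|) ne.
exists `|H q.1 q.2|; split => //.
have NT : (N <= #|T|)%N.
  case: oT => // eT; move: ne; by rewrite eT setDv eqxx.
apply: le_trans (_ : `|H q.1 q.2| *+ #|T| <= _).
  by rewrite -[_ *+ #|T|]mulr_natr ler_wpM2l // ler_nat.
rewrite -sumr_const /ell; apply: ler_sum => p pT; exact: uT.
Qed.

Lemma sqrt_amgm (Q th l r : R) : 0 <= Q -> 0 <= th -> 0 <= l -> 0 < r ->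
  Q <= th * l -> Num.sqrt Q <= (th * r + l / r) / 2.
Proof.
move=> Q0 t0 l0 r0 hQ.
have x0 : 0 <= th * r by rewrite mulr_ge0 // ltW.
have y0 : 0 <= l / r by rewrite divr_ge0 // ltW.
have e : th * l = (th * r) * (l / r) by field; rewrite gt_eqF.
have s0 : 0 <= (th * r + l / r) / 2 by rewrite divr_ge0 // addr_ge0.
rewrite -(ger0_norm s0) -sqrtr_sqr ler_sqrt; last exact: sqr_ge0.
move: hQ; rewrite e; set x := th * r; set y := l / r => hQ.
have h : ((x + y) / 2) ^+ 2 = x * y + ((x - y) / 2) ^+ 2 by field.
rewrite h; have := sqr_ge0 ((x - y) / 2); lra.
Qed.

End Aux.

Section TL.
Variable R : rcfType.
Variables (n m K : nat) (a : nat -> 'cV[R]_n) (g : R).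
Hypothesis g0 : 0 <= g.
Hypothesis K2 : (2 <= K)%N.
Hypothesis hub : forall X : 'M[R]_n, symmx X -> ksparse K X -> l1B m a X / m%:R <= g * frob X.
Let r : R := Num.sqrt (K.-1)%:R.

Lemma r_gt0 : 0 < r.
Proof. by rewrite sqrtr_gt0 ltr0n; case: K K2 => // -[]. Qed.

Lemma r_sq : r ^+ 2 = (K.-1)%:R.
Proof. by rewrite sqr_sqrtr // ler0n. Qed.

Lemma TL_aux (H : 'M[R]_n) (sH : symmx H) c (Rs : {set 'I_n * 'I_n}) :
  (#|Rs| < c)%N ->
  symset Rs -> forall th, 0 <= th -> (forall p, p \in Rs -> `|H p.1 p.2| <= th) ->
  l1B m a (restr Rs H) / m%:R <= g * (th * r / 2 + ell H Rs / r).
Proof.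
move: Rs; elim: c => [|c IH] Rs cRs // sRs th th0 hth.
have r0 := r_gt0.
have [e0|ne] := eqVneq Rs set0.
  rewrite e0 restr0 l1B_0 mul0r mulr_ge0 // addr_ge0 //.
    by rewrite divr_ge0 // mulr_ge0 // ltW.
  by rewrite divr_ge0 ?ell_ge0 // ltW.
have [T [sTR sT cT uT oT]] := GB sH sRs K.
have [eR dj] := split_set sTR.
have Tne : (0 < #|T|)%N.
  case: oT => [eT|hK]; last by lia.
  by rewrite eT card_gt0.
have oT' : T = Rs \/ (K.-1 <= #|T|)%N by case: oT => [->|?]; [left|right; lia].
have [th' [th'0 hth' bth']] := upper_theta sTR uT oT'.
have sD : symset (Rs :\: T).
  by move=> p; rewrite !inE sT sRs.
have cD : (#|Rs :\: T| < c)%N.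
  by rewrite (cardsDS sTR); have := subset_leq_card sTR; move: cRs Tne; lia.
have IH' := IH _ cD sD th' th'0 hth'.
have hT := hub (restr_sym sH sT) (restr_sparse H cT).
rewrite frob_restr in hT.
have hq : Num.sqrt (qq H T) <= (th * r + ell H T / r) / 2.
  apply: sqrt_amgm => //; [exact: qq_ge0 | exact: ell_ge0 |].
  apply: qq_le => p pT; apply: hth; exact: (subsetP sTR).
have eell : ell H Rs = ell H T + ell H (Rs :\: T) by rewrite {1}eR ell_add.
have erestr : restr Rs H = restr T H + restr (Rs :\: T) H by rewrite {1}eR restr_add.
rewrite erestr eell.
apply: le_trans (_ : (l1B m a (restr T H) + l1B m a (restr (Rs :\: T) H)) / m%:R <= _).
  by rewrite ler_wpM2r ?invr_ge0 ?ler0n // l1B_add.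
rewrite mulrDl.
have k1 : th' * r / 2 <= ell H T / r / 2.
  rewrite ler_pM2r ?invr_gt0 ?ltr0n // ler_pdivlMr // -mulrA -expr2 r_sq; exact: bth'.
apply: le_trans (lerD hT IH') _.
rewrite -mulrDr ler_wpM2l //.
have : Num.sqrt (qq H T) + th' * r / 2 <= th * r / 2 + ell H T / r.
  by apply: le_trans (lerD hq k1) _; lra.
rewrite mulrDl; lra.
Qed.

Lemma TL (H : 'M[R]_n) (sH : symmx H) (Rs : {set 'I_n * 'I_n}) :
  symset Rs -> forall th, 0 <= th -> (forall p, p \in Rs -> `|H p.1 p.2| <= th) ->
  l1B m a (restr Rs H) / m%:R <= g * (th * r / 2 + ell H Rs / r).
Proof. exact: (TL_aux sH (ltnSn #|Rs|)). Qed.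

End TL.


Lemma final_alg (R : rcfType) (h g be s2 w F FR e t l1 lR th N1 sk sK r C : R) :
  0 <= g -> 0 < be -> s2 ^+ 2 = 2 -> 0 < s2 -> 0 <= F -> 0 <= FR -> 0 <= e ->
  0 <= t -> 0 <= l1 -> 0 <= lR -> 0 <= th -> 0 < r -> 0 < sK -> 0 <= sk ->
  3 * g <= C ->
  be * s2 + g * w <= h ->
  h * F <= 2 * e + g * (th * r / 2 + lR / r) ->
  th * N1 <= l1 -> r ^+ 2 <= 2 * N1 ->
  l1 + lR <= sk * F + 2 * t ->
  FR ^+ 2 <= th * lR ->
  sk <= w * r -> sK <= s2 * r -> s2 * sk <= r ->
  F + FR <= (C / be + 2) * (t / sK) + 3 / be * e.
Proof.
move=> g0 be0 s22 s20 F0 FR0 e0 t0 l10 lR0 th0 r0 sK0 sk0 hC hb hF hth hN hL hFR hsk hsK hs2.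
have hir : r * r^-1 = 1 by rewrite mulfV // gt_eqF.
have ir0 : 0 < r^-1 by rewrite invr_gt0.
have hiK : sK * sK^-1 = 1 by rewrite mulfV // gt_eqF.
have iK0 : 0 < sK^-1 by rewrite invr_gt0.
have hib : be * be^-1 = 1 by rewrite mulfV // gt_eqF.
have ib0 : 0 < be^-1 by rewrite invr_gt0.
have a1 : th * r / 2 <= l1 * r^-1.
  have : th * (r ^+ 2) <= th * (2 * N1) by rewrite ler_wpM2l.
  have : th * r * r * r^-1 = th * r by rewrite -mulrA hir mulr1.
  move=> e1 h1; have : th * r * r <= 2 * l1 by rewrite -mulrA -expr2; nra.
  move=> h2; have := ler_wpM2r (ltW ir0) h2; rewrite e1; lra.
have a3 : sk * r^-1 <= w.
  have := ler_wpM2r (ltW ir0) hsk; by rewrite -mulrA hir mulr1.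
have a4 : be * s2 * F <= 2 * e + 2 * g * (t * r^-1).
  have b1 : (l1 + lR) * r^-1 <= (sk * F + 2 * t) * r^-1 by rewrite ler_wpM2r // ltW.
  have b2 : sk * r^-1 * F <= w * F by rewrite ler_wpM2r.
  have b3 : (be * s2 + g * w) * F <= h * F by rewrite ler_wpM2r.
  have b4 : g * (th * r / 2 + lR * r^-1) <= g * ((l1 + lR) * r^-1).
    by rewrite ler_wpM2l //; lra.
  have b5 : g * ((l1 + lR) * r^-1) <= g * (sk * r^-1 * F + 2 * (t * r^-1)).
    rewrite ler_wpM2l //; apply: le_trans b1 _; rewrite le_eqVlt; apply/orP; left;
    apply/eqP; ring.
  have b6 : g * (sk * r^-1 * F) <= g * (w * F) by rewrite ler_wpM2l.
  nra.
have a5 : t / r <= s2 * (t / sK).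
  have h5 := ler_wpM2r (mulr_ge0 (mulr_ge0 t0 (ltW ir0)) (ltW iK0)) hsK.
  have e1 : sK * (t * r^-1 * sK^-1) = t / r by field; rewrite !gt_eqF.
  have e2 : s2 * r * (t * r^-1 * sK^-1) = s2 * (t / sK) by field; rewrite !gt_eqF.
  by rewrite -e1 -e2.
set u := t / sK.
have u0 : 0 <= u by rewrite divr_ge0 // ltW.
have a6 : be * s2 * F <= s2 * (s2 * e + 2 * g * u).
  have : 2 * g * (t / r) <= 2 * g * (s2 * u) by rewrite ler_wpM2l // mulr_ge0.
  have : s2 * (s2 * e) = 2 * e by rewrite mulrA -expr2 s22.
  lra.
have a6' : be * F <= s2 * e + 2 * g * u.
  by rewrite -(ler_pM2l s20) mulrA (mulrC s2 be).
have a7 : s2 * r * FR <= l1 + lR.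
  have l0 : 0 <= l1 + lR by rewrite addr_ge0.
  rewrite -(ler_pXn2r (n:=2)) // ?nnegrE ?mulr_ge0 //; try exact: ltW.
  have c1 : r ^+ 2 * FR ^+ 2 <= r ^+ 2 * (th * lR) by rewrite ler_wpM2l // sqr_ge0.
  have c2 : r ^+ 2 * (th * lR) <= 2 * N1 * (th * lR) by rewrite ler_wpM2r // mulr_ge0.
  have c3 : th * N1 * lR <= l1 * lR by rewrite ler_wpM2r.
  have c4 := sqr_ge0 (l1 - lR).
  rewrite !exprMn s22; nra.
have a8 : s2 * r * FR <= s2 * r * (F / 2) + s2 * r * (2 * u).
  apply: le_trans a7 (le_trans hL _); apply: lerD.
    have c1 : 2 * sk <= s2 * r by rewrite -s22 expr2 -mulrA ler_wpM2l // ltW.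
    have c2 := ler_wpM2r F0 c1.
    have e1 : s2 * r * (F / 2) = s2 * r * F / 2 by field.
    rewrite e1; lra.
  have c1 := ler_wpM2r (mulr_ge0 t0 (ltW iK0)) hsK.
  have e1 : sK * (t * sK^-1) = t by field; rewrite !gt_eqF.
  rewrite e1 in c1; rewrite /u; nra.
have a9 : FR <= F / 2 + 2 * u.
  by move: a8; rewrite -mulrDr ler_pM2l // mulr_gt0.
have a10 : F + FR <= 3 / 2 * F + 2 * u by lra.
have s2le : s2 <= 2.
  rewrite -(ler_pXn2r (n:=2)) ?s22 ?nnegrE //; try lra; exact: ltW.
have a11 : 3 / 2 * F <= (3 * e + 3 * g * u) / be.
  rewrite ler_pdivlMr //; nra.
have a12 : (3 * e + 3 * g * u) / be <= C / be * u + 3 / be * e.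
  have : 3 * g * u <= C * u by rewrite ler_wpM2r.
  move=> hh; have := ler_wpM2r (ltW ib0) hh; nra.
rewrite mulrDl; lra.
Qed.


Section Aux2.
Variable R : rcfType.
Variable n : nat.
Implicit Types (H X Y : 'M[R]_n) (A B T : {set 'I_n * 'I_n}).

Lemma mxinnerN (B X : 'M[R]_n) : mxinner B (- X) = - mxinner B X.
Proof.
rewrite /mxinner -sumrN; apply: eq_bigr => i _; rewrite -sumrN.
by apply: eq_bigr => j _; rewrite mxE mulrN.
Qed.

Lemma mxinnerBl (A B X : 'M[R]_n) : mxinner (A - B) X = mxinner A X - mxinner B X.
Proof.
rewrite /mxinner -sumrB; apply: eq_bigr => i _; rewrite -sumrB.
by apply: eq_bigr => j _; rewrite !mxE mulrBl.
Qed.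

Lemma mxinnerBr (B X Y : 'M[R]_n) : mxinner B (X - Y) = mxinner B X - mxinner B Y.
Proof. by rewrite mxinnerD mxinnerN. Qed.

Lemma l1B_sub m (a : nat -> 'cV[R]_n) X Y : l1B m a (X - Y) <= l1B m a X + l1B m a Y.
Proof.
rewrite /l1B -big_split; apply: ler_sum => i _; rewrite mxinnerBr; exact: ler_normB.
Qed.

Lemma restr_compl (S : 'M[R]_n) A : S - restr A S = restr (~: A) S.
Proof.
apply/matrixP => i j; rewrite !mxE inE.
by case: ((i, j) \in A) => /=; rewrite ?subrr ?subr0.
Qed.

Lemma ell_split H A : ell H setT = ell H A + ell H (~: A).
Proof.
rewrite -(setUCr A) ell_add //; apply: disjP' => p; rewrite inE => ->; done.
Qed.

Lemma symB X Y : symmx X -> symmx Y -> symmx (X - Y).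
Proof.
move=> sX sY; apply/matrixP => i j; rewrite !mxE.
by rewrite -{1}sX -{1}sY !mxE.
Qed.

End Aux2.

Lemma sqrtD_le (R : rcfType) (x y : R) : 0 <= x -> 0 <= y ->
  Num.sqrt (x + y) <= Num.sqrt x + Num.sqrt y.
Proof.
move=> x0 y0.
have s0 : 0 <= Num.sqrt x + Num.sqrt y by rewrite addr_ge0 ?sqrtr_ge0.
rewrite -(ger0_norm s0) -sqrtr_sqr ler_sqrt; last exact: sqr_ge0.
rewrite sqrrD !sqr_sqrtr //.
have : 0 <= Num.sqrt x * Num.sqrt y by rewrite mulr_ge0 ?sqrtr_ge0.
lra.
Qed.

Lemma reindex2 (R : rcfType) (F : nat -> R) m :
  \sum_(i < m) (F (2 * i)%N + F (2 * i).+1) = \sum_(j < 2 * m) F j.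
Proof.
elim: m => [|m IH]; first by rewrite !big_ord0.
rewrite big_ord_recr IH /= (_ : (2 * m.+1 = (2 * m).+2)%N); last by lia.
by rewrite !big_ord_recr /= addrA.
Qed.

Lemma h_le_g (R : rcfType) n m (a : nat -> 'cV[R]_n) k K2 glb gub :
  (0 < n)%N -> (1 <= K2)%N -> rip_lb_holds m a (k + K2) glb ->
  rip_ub_holds m a K2 gub -> 1 - glb <= 1 + gub.
Proof.
case: n a => // n' a _ hK hlb hub.
set J := const_mx 1 : 'M[R]_n'.+1.
set A := [set (@ord0 n', @ord0 n')].
have sJ : symmx J by apply/matrixP => i j; rewrite !mxE.
have sA : symset A by move=> p; rewrite !inE /sw; case: p => i j /=; rewrite !xpair_eqE andbC.
have sX := restr_sym sJ sA.
have cA : #|A| = 1%N by rewrite cards1.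
have f1 : frob (restr A J) = 1.
  by rewrite frob_restr /qq big_set1 mxE expr1n sqrtr1.
have h1 := hlb _ sX (restr_sparse J (_ : (#|A| <= k + K2)%N)).
have h2 := hub _ sX (restr_sparse J (_ : (#|A| <= K2)%N)).
rewrite cA in h1 h2; have := h1 ltac:(lia); have := h2 hK.
rewrite f1 !mulr1; lra.
Qed.

Theorem lemma2 (R : rcfType) :
  exists C1 C2 C3 : R -> R -> R,
    (forall g1 g2, 0 < C1 g1 g2 /\ 0 < C2 g1 g2 /\ 0 < C3 g1 g2) /\
    forall (n m : nat) (a : nat -> 'cV[R]_n) (k K2 : nat) (glb gub : R),
      is_gamma_lb m a (k + K2) glb ->
      is_gamma_ub m a K2 gub ->
      forall (Sigma : 'M[R]_n) (Om : {set 'I_n * 'I_n}),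
        psd Sigma ->
        best_ksparse_set k Sigma Om ->
      forall (eta : nat -> R) (eps1 : R),
        l1vec m eta <= eps1 ->
      forall (Sigmah : 'M[R]_n),
        is_minimizer m a (fun i => mxinner (Amx a i) Sigma + eta i) eps1 Sigmah ->
      forall beta2 : R,
        (2 * k < K2)%N ->
        0 < beta2 ->
        beta2 <= (1 - glb) / Num.sqrt 2 - (1 + gub) * Num.sqrt (k%:R / K2%:R) ->
        frob (Sigmah - Sigma) <=
          (C1 glb gub / beta2 + C3 glb gub) * (l1mx (Sigma - restr Om Sigma) / Num.sqrt K2%:R)
          + C2 glb gub / beta2 * (eps1 / m%:R).
Proof.
exists (fun _ g2 => 3 * (`|1 + g2| + 1)), (fun _ _ => 3), (fun _ _ => 2).
split.
  move=> g1 g2; have := normr_ge0 (1 + g2); split; [lra | split; lra].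
move=> n m a k K2 glb gub [hlb _] [hub _] Sigma Om psdS [cOm _] eta eps1 heta
  Sigmah [[psdSh resSh] minSh] beta2 hK bpos hbeta.
set H := Sigmah - Sigma.
set t := l1mx (Sigma - restr Om Sigma).
set e := eps1 / m%:R.
have sS : symmx Sigma := psdS.1.
have sSh : symmx Sigmah := psdSh.1.
have sH : symmx H := symB sSh sS.
have eps0 : 0 <= eps1.
  by apply: le_trans heta; apply: sumr_ge0 => i _; exact: normr_ge0.
have e0 : 0 <= e by rewrite divr_ge0.
have et : t = ell Sigma (~: Om) by rewrite /t restr_compl l1mx_restr.
have t0 : 0 <= t by rewrite et ell_ge0.
have sK0 : 0 < Num.sqrt (K2%:R : R) by rewrite sqrtr_gt0 ltr0n; lia.
have ib0 : 0 < beta2^-1 by rewrite invr_gt0.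
have Cpos : 0 <= 3 * (`|1 + gub| + 1) by have := normr_ge0 (1 + gub); lra.
have u0 : 0 <= t / Num.sqrt K2%:R by rewrite divr_ge0 // ltW.
have rhs0 : 0 <= (3 * (`|1 + gub| + 1) / beta2 + 2) * (t / Num.sqrt K2%:R) + 3 / beta2 * e.
  by rewrite addr_ge0 // mulr_ge0 // ?addr_ge0 ?divr_ge0 // ltW.
have feasS : feasible m a (fun i => mxinner (Amx a i) Sigma + eta i) eps1 Sigma.
  split => //; apply: le_trans heta; rewrite /resid /l1vec le_eqVlt; apply/orP; left.
  by apply/eqP; apply: eq_bigr => i _; congr `|_|; ring.
have minl : l1mx Sigmah <= l1mx Sigma := minSh _ feasS.
have cone : ell H (~: Om) <= ell H Om + 2 * t.
  have m1 := minl; rewrite (l1mx_all Sigmah) (l1mx_all Sigma) !(ell_split _ Om) in m1.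
  have p1 : ell Sigma Om <= ell Sigmah Om + ell H Om.
    rewrite /ell -big_split; apply: ler_sum => p _ /=.
    have -> : Sigma p.1 p.2 = Sigmah p.1 p.2 - H p.1 p.2 by rewrite /H !mxE; ring.
    exact: ler_normB.
  have p2 : ell H (~: Om) <= ell Sigmah (~: Om) + ell Sigma (~: Om).
    rewrite /ell -big_split; apply: ler_sum => p _ /=.
    rewrite /H !mxE; exact: ler_normB.
  rewrite et; lra.
have hLH : l1B m a H <= 2 * eps1.
  pose f j := mxinner (Amx a j) H.
  pose rr j := (mxinner (Amx a j) Sigma + eta j) - mxinner (Amx a j) Sigmah.
  have fj : forall j, `|f j| <= `|eta j| + `|rr j|.
    move=> j; rewrite /f /rr /H mxinnerBr.
    set x := mxinner _ Sigmah; set y := mxinner _ Sigma.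
    have -> : x - y = eta j - ((y + eta j) - x) by ring.
    exact: ler_normB.
  apply: le_trans (_ : \sum_(i < m) (`|f (2 * i)%N| + `|f (2 * i).+1|) <= _).
    rewrite /l1B; apply: ler_sum => i _; rewrite /Bmx mxinnerBl; exact: ler_normB.
  rewrite (reindex2 (fun j => `|f j|)).
  apply: le_trans (_ : \sum_(j < 2 * m) (`|eta j| + `|rr j|) <= _).
    by apply: ler_sum => j _; exact: fj.
  rewrite big_split /=; have : l1vec m rr <= eps1 := resSh.
  rewrite /l1vec in heta *; lra.
have [K1|K2ge] : (K2 = 1)%N \/ (2 <= K2)%N by clear -hK; lia.
  have k0 : k = 0%N by clear -hK K1; lia.
  have Om0 : Om = set0 by apply: cards0_eq; rewrite cOm k0 min0n.
  have tS : t = l1mx Sigma by rewrite /t Om0 restr0 subr0.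
  have hHl : l1mx H <= l1mx Sigmah + l1mx Sigma.
    rewrite !l1mx_all /ell -big_split; apply: ler_sum => p _ /=.
    rewrite /H !mxE; exact: ler_normB.
  apply: le_trans (frob_le_l1 H) _.
  rewrite K1 sqrtr1 divr1.
  have : 0 <= 3 * (`|1 + gub| + 1) / beta2 * t by rewrite mulr_ge0 // divr_ge0 // ltW.
  have : 0 <= 3 / beta2 * e by rewrite mulr_ge0 // divr_ge0 // ltW.
  rewrite [(_ + 2) * t]mulrDl; move: hHl minl; rewrite -tS => *; lra.
have [n0|npos] : n = 0%N \/ (0 < n)%N by clear; lia.
  apply: le_trans rhs0; rewrite frob_all /qq big1 ?sqrtr0 // => -[[i hi] j] _.
  exfalso; move: hi; rewrite [n]n0 ltn0 //.
have hg : 1 - glb <= 1 + gub by apply: (h_le_g npos _ hlb hub); clear -K2ge; lia.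
set s2 : R := Num.sqrt 2.
set x : R := Num.sqrt (k%:R / K2%:R).
set w := s2 * x.
have s20 : 0 < s2 by rewrite sqrtr_gt0.
have s22 : s2 ^+ 2 = 2 by rewrite sqr_sqrtr.
have K2r : 0 < (K2%:R : R) by rewrite ltr0n; clear -K2ge; lia.
have w0 : 0 <= w by rewrite mulr_ge0 ?sqrtr_ge0 // ltW.
have wsq : w = Num.sqrt (2 * (k%:R / K2%:R)) by rewrite sqrtrM.
have w1 : w <= 1.
  rewrite wsq -[X in _ <= X]sqrtr1 ler_sqrt // mulrA ler_pdivrMr // mul1r -natrM ler_nat.
  by clear -hK; lia.
have hb' : beta2 * s2 + (1 + gub) * w <= 1 - glb.
  have := ler_wpM2r (ltW s20) hbeta; rewrite mulrBl divfK ?gt_eqF //.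
  rewrite /w /x; lra.
have g0 : 0 <= 1 + gub.
  rewrite leNgt; apply/negP => gn.
  have : 0 < beta2 * s2 by rewrite mulr_gt0.
  nra.
set T0 := Om :|: (@sw n) @^-1: Om.
have sT0 : symset T0 by move=> p; rewrite !inE sw_inv orbC.
have cOmk : (#|Om| <= k)%N by rewrite cOm geq_minl.
have cT0 : (#|T0| <= 2 * k)%N.
  apply: leq_trans (leq_card_setU _ _).1 _.
  rewrite card_preimset; last exact: (can_inj (@sw_inv n)).
  by clear -cOmk; lia.
have OmT0 : Om \subset T0 by exact: subsetUl.
set R0 := ~: T0.
have sR0 : symset R0.
  move=> p; rewrite !in_setC; congr negb; have hh := sT0 p; exact hh.
set cap1 := (k + K2 - #|T0|)%N.
have [T1 [sT1 syT1 cT1 uT1 oT1]] := GB sH sR0 cap1.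
have oT1' : T1 = R0 \/ (cap1.-1 <= #|T1|)%N.
  by case: oT1 => [->|h1]; [left | right; clear -h1; lia].
have [th [th0 hth bth]] := upper_theta sT1 uT1 oT1'.
set rest := R0 :\: T1.
have srest : symset rest by move=> p; rewrite !in_setD; congr andb; [congr negb|]; [exact (syT1 p) | exact (sR0 p)].
set T01 := T0 :|: T1.
have sT01 : symset T01 by move=> p; rewrite !(in_setU _ T0 T1); congr orb; [exact (sT0 p) | exact (syT1 p)].
have cT01 : (#|T01| <= k + K2)%N.
  apply: leq_trans (leq_card_setU _ _).1 _.
  by rewrite /cap1 in cT1; clear -cT1 cT0 hK; lia.
have djT : [disjoint T01 & rest].
  apply: disjP' => p; rewrite (in_setU _ T0 T1) (in_setD R0 T1) (in_setC _ T0).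
  move=> /orP[pT0|pT1] /andP[nT1 nT0].
    by rewrite pT0 in nT0.
  by rewrite pT1 in nT1.
have covT : T01 :|: rest = setT.
  apply/setP => p; rewrite in_setT (in_setU _ T01 rest) (in_setU _ T0 T1) (in_setD R0 T1) (in_setC _ T0).
  by case: (p \in T0); case: (p \in T1).
have eH : H = restr T01 H + restr rest H by rewrite -restr_add // covT restrT.
have e01 : restr T01 H = H - restr rest H by rewrite {2}eH addrK.
have ellR0 : ell H R0 = ell H T1 + ell H rest.
  by have [eR dj] := split_set sT1; rewrite {1}eR ell_add.
have qqT : qq H setT = qq H T01 + qq H rest by rewrite -covT qq_add.
set r : R := Num.sqrt (K2.-1)%:R.
have hTL := TL g0 K2ge hub sH srest th0 hth.
rewrite -/r in hTL.
have hlow := hlb _ (restr_sym sH sT01) (restr_sparse H cT01).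
rewrite frob_restr in hlow.
set F := Num.sqrt (qq H T01).
set FR := Num.sqrt (qq H rest).
have m0 : 0 <= (m%:R : R)^-1 by rewrite invr_ge0 ler0n.
have hF : (1 - glb) * F <= 2 * e + (1 + gub) * (th * r / 2 + ell H rest / r).
  apply: le_trans hlow _; rewrite e01.
  apply: le_trans (_ : (l1B m a H + l1B m a (restr rest H)) / m%:R <= _).
    by apply: ler_wpM2r => //; exact: l1B_sub.
  rewrite mulrDl; apply: lerD => //.
  by rewrite /e mulrA; apply: ler_wpM2r.
have hFR : FR ^+ 2 <= th * ell H rest.
  by rewrite sqr_sqrtr ?qq_ge0 //; apply: qq_le.
have hfrob : frob H <= F + FR by rewrite frob_all qqT; apply: sqrtD_le; exact: qq_ge0.
have hOm : ell H Om <= Num.sqrt k%:R * F.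
  rewrite -sqrtrM ?ler0n // -(ger0_norm (ell_ge0 H Om)) -sqrtr_sqr ler_sqrt;
    last by rewrite mulr_ge0 ?ler0n ?qq_ge0.
  apply: le_trans (ell_cs H Om) _.
  apply: le_trans (_ : #|Om|%:R * qq H T01 <= _).
    by apply: ler_wpM2l; [exact: ler0n | apply: qq_sub; exact: subset_trans OmT0 (subsetUl _ _)].
  by apply: ler_wpM2r; [exact: qq_ge0 | rewrite ler_nat].
have hL : ell H T1 + ell H rest <= Num.sqrt k%:R * F + 2 * t.
  rewrite -ellR0; apply: le_trans (_ : ell H (~: Om) <= _).
    by apply: ell_sub; rewrite setCS.
  by apply: le_trans cone _; rewrite lerD2r.
have r0 : 0 < r by rewrite sqrtr_gt0 ltr0n; clear -K2ge; lia.
have hN : r ^+ 2 <= 2 * (cap1.-1)%:R.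
  rewrite sqr_sqrtr ?ler0n // -natrM ler_nat /cap1.
  by clear -cT0 hK K2ge; lia.
have hsk : Num.sqrt k%:R <= w * r.
  rewrite wsq /r -sqrtrM; last by apply: mulr_ge0 => //; apply: divr_ge0; exact: ler0n.
  rewrite ler_sqrt; last by apply: mulr_ge0; [apply: mulr_ge0 => //; apply: divr_ge0|]; exact: ler0n.
  have -> : 2 * (k%:R / K2%:R) * (K2.-1)%:R = (2 * k * K2.-1)%:R / (K2%:R : R).
    by rewrite !natrM; field; rewrite gt_eqF.
  rewrite ler_pdivlMr // -natrM ler_nat mulnAC (mulnC k) leq_mul2r.
  by apply/orP; right; clear -K2ge; lia.
have hsK : Num.sqrt K2%:R <= s2 * r.
  rewrite /s2 /r -sqrtrM // ler_sqrt; last by rewrite mulr_ge0 ?ler0n.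
  by rewrite -natrM ler_nat; clear -K2ge; lia.
have hs2 : s2 * Num.sqrt k%:R <= r.
  rewrite /s2 /r -sqrtrM // ler_sqrt ?ler0n //.
  by rewrite -natrM ler_nat; clear -hK; lia.
have hC : 3 * (1 + gub) <= 3 * (`|1 + gub| + 1).
  by have := ler_norm (1 + gub); lra.
have F0 : 0 <= F by exact: sqrtr_ge0.
have FR0 : 0 <= FR by exact: sqrtr_ge0.
have sk0 : 0 <= Num.sqrt (k%:R : R) by exact: sqrtr_ge0.
have fin := final_alg g0 bpos s22 s20 F0 FR0 e0 t0 (ell_ge0 H T1) (ell_ge0 H rest)
  th0 r0 sK0 sk0 hC hb' hF bth hN hL hFR hsk hsK hs2.
exact: le_trans hfrob fin.
Qed.
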